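(* For all integers $0 \le p \le q$, $$F_{p,q}(x) \;=\; (1+x)^p \sum_{k=0}^{q} \binom{q}{k}\binom{p+k}{k} x^k.$$
   Context: Let $\mathbb{N} = \{0,1,2,\dots\}$. For $(p,q) \in \mathbb{N}^2$ and $n \in \mathbb{N}$, an unrestricted generalized jump path of length $n$ starting at $(p,q)$ is a sequence $(x_0, \dots, x_n)$ of points of $\mathbb{N}^2$ satisfying three conditions: - $x_0 = (p,q)$; - for every $i$, each coordinate of $x_{i+1}$ is at most the corresponding coordinate of $x_i$; - $x_{i+1} \ne x_i$ for every $i$. Let $u((p,q),n)$ denote the number of such paths. Define the polynomial $$F_{p,q}(x) = \sum_{k=0}^{p+q} u((p,q),k)\, x^k.$$ *)

(* Defs.v *)
From HB Require Import structures.
From mathcomp Require Import all_boot all_order all_algebra.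
Set Implicit Arguments. Unset Strict Implicit. Unset Printing Implicit Defensive.
Import GRing.Theory.

Definition is_jump_path (p q n : nat) (x : seq (nat * nat)) : bool :=
  [&& size x == n.+1,
      nth (0, 0) x 0 == (p, q) &
      all (fun i =>
             [&& (nth (0,0) x i.+1).1 <= (nth (0,0) x i).1,
                 (nth (0,0) x i.+1).2 <= (nth (0,0) x i).2 &
                 nth (0,0) x i.+1 != nth (0,0) x i]) (iota 0 n)].

(* Every point of such a path has coordinates bounded by (p,q), so paths are
   enumerated as tuples over 'I_p.+1 * 'I_q.+1, then read back in N^2. *)
Definition pts_of (p q n : nat) (t : n.+1.-tuple ('I_p.+1 * 'I_q.+1))
  : seq (nat * nat) := map (fun z => (val z.1, val z.2)) t.

Definition u (p q n : nat) : nat :=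
  #|[set t : n.+1.-tuple ('I_p.+1 * 'I_q.+1) | is_jump_path p q n (pts_of t)]|.

Definition F (p q : nat) : {poly int} :=
  \sum_(k < (p + q).+1) (u p q k)%:R *: 'X^k.

(* Main.v *)
Require Import Defs.
From HB Require Import structures.
From mathcomp Require Import all_boot all_order all_algebra.
From mathcomp Require Import ring zify.
Import GRing.Theory.
Set Implicit Arguments. Unset Strict Implicit.

Lemma jump_cons p q n x a b s :
  is_jump_path p q n.+1 (x :: (a,b) :: s) =
  [&& x == (p,q), a <= p, b <= q, (a,b) != (p,q) & is_jump_path a b n ((a,b)::s)].
Proof.
rewrite /is_jump_path /=.
case: (x =P (p,q)) => [->|nx]; last by rewrite andbF.
rewrite eqxx /= (iotaDl 1 0) all_map /=.
rewrite !eqSS.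
by case: (size s == n); case: (a <= p); case: (b <= q); case: ((a,b) != (p,q)).
Qed.

Lemma jump_bound p q n x k : is_jump_path p q n x ->
  ((nth (0,0) x k).1 <= p) && ((nth (0,0) x k).2 <= q).
Proof.
case/and3P => /eqP hs /eqP h0 /allP ha.
elim: k => [|k IH]; first by rewrite h0 /= !leqnn.
case: (ltnP k n) => hk.
  have := ha k; rewrite mem_iota add0n hk => /(_ isT) /and3P [h1 h2 _].
  case/andP: IH => i1 i2.
  by rewrite (leq_trans h1 i1) (leq_trans h2 i2).
by rewrite nth_default // hs.
Qed.

Lemma jump_all p q n x : is_jump_path p q n x ->
  all (fun z => (z.1 <= p) && (z.2 <= q)) x.
Proof.
move=> h; apply/(all_nthP (0,0)) => k _; exact: jump_bound h.
Qed.

Lemma cnt_widen p q n i j : i <= p -> j <= q ->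
 #|[set s : n.+1.-tuple ('I_p.+1 * 'I_q.+1) | is_jump_path i j n (pts_of s)]| = u i j n.
Proof.
move=> hi hj.
have hi' : i.+1 <= p.+1 by [].
have hj' : j.+1 <= q.+1 by [].
pose w (z : 'I_i.+1 * 'I_j.+1) : 'I_p.+1 * 'I_q.+1 := (widen_ord hi' z.1, widen_ord hj' z.2).
have winj : injective w.
  move=> [a b] [c d] [e1 e2].
  by congr pair; apply: val_inj; [exact: e1|exact: e2].
pose W (t : n.+1.-tuple ('I_i.+1 * 'I_j.+1)) := map_tuple w t.
have Winj : injective W.
  move=> t1 t2 /(congr1 val) /= e; apply: val_inj; exact: inj_map e.
have Wpts t : pts_of (W t) = pts_of t.
  by rewrite /pts_of /= -map_comp; apply: eq_map => -[a b].
rewrite /u -(card_imset _ Winj); apply: eq_card => s; rewrite inE; apply/idP/imsetP => [h|[t]]; last first.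
  by rewrite inE => ht ->; rewrite Wpts.
have ha := jump_all h.
pose g (z : 'I_p.+1 * 'I_q.+1) : 'I_i.+1 * 'I_j.+1 := (inord z.1, inord z.2).
exists (map_tuple g s).
  by rewrite inE; congr is_jump_path: h; rewrite /pts_of /= -map_comp;
     apply/eq_in_map => z zs /=; move/allP: ha => /(_ _ (map_f _ zs)) /= /andP[h1 h2];
     rewrite !inordK.
apply: val_inj; rewrite /= -map_comp -[LHS]map_id.
apply/eq_in_map => z zs /=; move/allP: ha => /(_ _ (map_f (fun z => (val z.1, val z.2)) zs)) /= /andP[h1 h2].
by case: z {zs} h1 h2 => a b h1 h2; congr pair; apply: val_inj; rewrite /= inordK.
Qed.

Lemma pts_cons p q n (x : 'I_p.+1 * 'I_q.+1) (t : n.+1.-tuple ('I_p.+1 * 'I_q.+1)) :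
  pts_of [tuple of x :: t] = (val x.1, val x.2) :: pts_of t.
Proof. by []. Qed.

Lemma head_eq p q (x y : 'I_p.+1 * 'I_q.+1) :
  ((val x.1, val x.2) == (val y.1, val y.2)) = (x == y).
Proof.
case: x y => [a b] [c d] /=; rewrite !xpair_eqE.
by [].
Qed.

Lemma uS p q n : u p q n.+1 =
  \sum_(y : 'I_p.+1 * 'I_q.+1) ((val y.1, val y.2) != (p,q)) * u y.1 y.2 n.
Proof.
pose top : 'I_p.+1 * 'I_q.+1 := (ord_max, ord_max).
rewrite {1}/u -sum1dep_card.
rewrite (partition_big (@thead _ _) (pred1 top)) => [|t]; last first.
  case/tupleP: t => x t; rewrite pts_cons theadE /=.
  by case/and3P => _ /eqP /= h _; rewrite -head_eq h.
rewrite big_pred1_eq.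
rewrite (reindex (fun t : n.+1.-tuple ('I_p.+1 * 'I_q.+1) => [tuple of top :: t])) /=; last first.
  pose ttail (t : n.+2.-tuple ('I_p.+1 * 'I_q.+1)) := [tuple of behead t].
  exists ttail => [t _ | t /andP[_ /eqP <-]]; first exact: val_inj.
  by rewrite -tuple_eta.
under [RHS]eq_bigr => y _ do rewrite -(cnt_widen n (leq_ord y.1) (leq_ord y.2)) -sum1dep_card big_distrr /= muln1.
under [RHS]eq_bigr => y _ do rewrite big_mkcond.
rewrite exchange_big /= big_mkcond /=.
apply: eq_bigr => s _.
rewrite theadE eqxx andbT.
have -> : pts_of [tuple of top :: s] = (p,q) :: pts_of s by [].
case/tupleP: s => y s.
have -> : pts_of [tuple of y :: s] = (val y.1, val y.2) :: map (fun z => (val z.1, val z.2)) s by [].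
rewrite jump_cons eqxx !leq_ord /=.
rewrite (bigD1 y) //= big1 ?addn0; last first.
  move=> z nz; case: ifP => // /and3P [_ /eqP /= h _].
  by move: nz; rewrite -head_eq h eqxx.
by case: (_ != _); case: (is_jump_path _ _ _ _).
Qed.

Lemma u0 p q : u p q 0 = 1.
Proof.
pose top : 'I_p.+1 * 'I_q.+1 := (ord_max, ord_max).
rewrite /u cardsE; apply: (@eq_card1 _ [tuple top]) => t.
case/tupleP: t => x t; rewrite [t]tuple0 /=.
rewrite !inE unfold_in /= andbT.
have -> : ((val x.1, val x.2) == (p, q)) = (x == top) by rewrite -head_eq.
apply/eqP/eqP => [-> // | e]; exact: (congr1 (@thead _ _) e).
Qed.

Lemma uz p q n : p + q < n -> u p q n = 0.
Proof.
elim: n p q => [//|n IH] p q h.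
rewrite uS big1 // => y _.
case: eqP => [//|ne]; rewrite IH ?muln0 //.
have h1 := leq_ord y.1; have h2 := leq_ord y.2.
have : (nat_of_ord y.1 != p) || (nat_of_ord y.2 != q).
  by rewrite -negb_and; apply/negP => /andP [/eqP e1 /eqP e2]; apply: ne; congr pair; [exact: e1|exact: e2].
move: (nat_of_ord y.1) (nat_of_ord y.2) h1 h2 => a b h1 h2.
by case/orP => /eqP hh; lia.
Qed.
Local Open Scope ring_scope.

Lemma Fc p q n : (F p q)`_n = (u p q n)%:R.
Proof.
rewrite /F coef_sum.
under eq_bigr do rewrite coefZ coefXn.
case: (ltnP n (p + q).+1) => hn.
  rewrite (bigD1 (Ordinal hn)) //= eqxx mulr1 big1 ?addr0 // => k hk.
  have -> : (n == k) = false.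
    by apply/negbTE; move: hk; apply: contra => /eqP e; apply/eqP/val_inj.
  by rewrite mulr0.
rewrite uz // big1 // => k _.
have : n != k by rewrite neq_ltn (leq_trans (ltn_ord k) hn) orbT.
by move/negbTE ->; rewrite mulr0.
Qed.

Definition S p q : {poly int} := \sum_(i < p.+1) \sum_(j < q.+1) F i j.

Lemma E p q : (1 + 'X) * F p q = 1 + 'X * S p q.
Proof.
apply/polyP => n.
rewrite mulrDl mul1r !coefD coefXM coef1 Fc coefXM.
case: n => [|n] /=; first by rewrite u0 addr0.
rewrite Fc /S !coef_sum.
under eq_bigr do rewrite coef_sum.
rewrite pair_big /=.
under eq_bigr do rewrite Fc.
rewrite (bigD1 (ord_max, ord_max)) //= uS natr_sum.
rewrite add0r addrC; congr (_ + _).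
rewrite [RHS]big_mkcond; apply: eq_bigr => y _ /=.
rewrite -(head_eq y (ord_max, ord_max)) /=.
by case: y => [[a ha] [b hb]] /=; case: ifP => h; rewrite ?mul1n ?mul0n.
Qed.

Lemma S_recp p q : S p.+1 q = S p q + \sum_(j < q.+1) F p.+1 j.
Proof. by rewrite /S big_ord_recr. Qed.

Lemma S_recq p q : S p q.+1 = S p q + \sum_(i < p.+1) F i q.+1.
Proof. by rewrite /S -big_split; apply: eq_bigr => i _; rewrite big_ord_recr. Qed.

Lemma F00 : F 0 0 = 1.
Proof.
have e := E 0 0; rewrite /S !big_ord1 in e.
have -> : F 0 0 = (1 + 'X) * F 0 0 - 'X * F 0 0 by ring.
by rewrite e; ring.
Qed.

Lemma F0S q : F 0 q.+1 = (1 + 'X) * F 0 q.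
Proof.
have e1 := E 0 q.+1; have e0 := E 0 q.
rewrite S_recq big_ord1 in e1.
have -> : F 0 q.+1 = (1 + 'X) * F 0 q.+1 - 'X * F 0 q.+1 by ring.
by rewrite e1 e0; ring.
Qed.

Lemma FS0 p : F p.+1 0 = (1 + 'X) * F p 0.
Proof.
have e1 := E p.+1 0; have e0 := E p 0.
rewrite S_recp big_ord1 in e1.
have -> : F p.+1 0 = (1 + 'X) * F p.+1 0 - 'X * F p.+1 0 by ring.
by rewrite e1 e0; ring.
Qed.

Lemma FSS p q : F p.+1 q.+1 = (1 + 'X) * (F p.+1 q + F p q.+1 - F p q).
Proof.
have e11 := E p.+1 q.+1; have e10 := E p.+1 q.
have e01 := E p q.+1; have e00 := E p q.
rewrite S_recp big_ord_recr /= in e11.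
rewrite S_recp in e10.
have -> : F p.+1 q.+1 = (1 + 'X) * F p.+1 q.+1 - 'X * F p.+1 q.+1 by ring.
have -> : (1 + 'X) * (F p.+1 q + F p q.+1 - F p q) =
  (1 + 'X) * F p.+1 q + (1 + 'X) * F p q.+1 - (1 + 'X) * F p q by ring.
rewrite e11 e10 e01 e00; ring.
Qed.

Definition GG p q : {poly int} :=
  \sum_(k < q.+1) ('C(q, k) * 'C(p + k, k))%:R *: 'X^k.

Lemma Gc p q n : (GG p q)`_n = ('C(q, n) * 'C(p + n, n))%:R.
Proof.
rewrite /GG coef_sum.
under eq_bigr do rewrite coefZ coefXn.
case: (ltnP n q.+1) => hn.
  rewrite (bigD1 (Ordinal hn)) //= eqxx mulr1 big1 ?addr0 // => k hk.
  have -> : (n == k) = false.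
    by apply/negbTE; move: hk; apply: contra => /eqP e; apply/eqP/val_inj.
  by rewrite mulr0.
rewrite bin_small // mul0n big1 // => k _.
have : n != k by rewrite neq_ltn (leq_trans (ltn_ord k) hn) orbT.
by move/negbTE ->; rewrite mulr0.
Qed.

Lemma G0 p : GG p 0 = 1.
Proof.
apply/polyP => n; rewrite Gc coef1.
by case: n => [|n]; rewrite /= ?bin0.
Qed.

Lemma G0q q : GG 0 q = (1 + 'X) ^+ q.
Proof.
rewrite addrC exprD1n /GG; apply: eq_bigr => k _.
by rewrite add0n binn muln1 scaler_nat.
Qed.

Lemma Grec p q : GG p.+1 q.+1 = (1 + 'X) * GG p.+1 q + GG p q.+1 - GG p q.
Proof.
apply/polyP => n.
rewrite !coefB !coefD mulrDl mul1r coefD coefXM !Gc.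
case: n => [|m] /=.
  by rewrite !bin0 !muln1 addr0 addrK.
rewrite !addnS !addSn !binS !(natrD, natrM); ring.
Qed.

Lemma main p q : F p q = (1 + 'X) ^+ p * GG p q.
Proof.
elim: p q => [|p IHp] q.
  rewrite expr0 mul1r G0q.
  elim: q => [|q IHq]; first by rewrite F00 expr0.
  by rewrite F0S IHq exprS.
elim: q => [|q IHq].
  by rewrite FS0 IHp !G0 !mulr1 exprS.
rewrite FSS IHq !IHp Grec exprS; ring.
Qed.
Unset Implicit Arguments.

Theorem theorem3p1 (p q : nat) (hpq : (p <= q)%N) :
  F p q = (1 + 'X) ^+ p *
          \sum_(k < q.+1) ('C(q, k) * 'C(p + k, k))%:R *: 'X^k.
Proof. exact: main. Qed.
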